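(* Let $M$ be a non-empty subset of $\operatorname{Sym}(n,\mathbb{R})$. The following are equivalent: (i) $M$ is non-dissipative, i.e. $0$ is the only positive semidefinite element of $\operatorname{span}_{\mathbb{R}}M$; (ii) there is a positive definite matrix $Q>0$ such that $\operatorname{tr}({}^tQFQ)=0$ for every $F\in M$; (iii) there is $T\in\operatorname{GL}(n,\mathbb{R})$ such that $\operatorname{tr}({}^tTFT)=0$ for every $F\in M$. *)

(* Defs.v *)
From HB Require Import structures.
From mathcomp Require Import all_boot all_order all_algebra.
From mathcomp Require Import reals.
Set Implicit Arguments. Unset Strict Implicit. Unset Printing Implicit Defensive.
Import Order.TTheory GRing.Theory Num.Theory.
Local Open Scope ring_scope.

Definition symmetric_mx (R : realType) (n : nat) (A : 'M[R]_n) : Prop :=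
  A^T = A.

Definition psd_mx (R : realType) (n : nat) (A : 'M[R]_n) : Prop :=
  symmetric_mx A /\ forall v : 'cV[R]_n, 0 <= (v^T *m A *m v) 0 0.

Definition pd_mx (R : realType) (n : nat) (A : 'M[R]_n) : Prop :=
  symmetric_mx A /\ forall v : 'cV[R]_n, v != 0 -> 0 < (v^T *m A *m v) 0 0.

Definition in_span (R : realType) (n : nat) (M : 'M[R]_n -> Prop)
    (A : 'M[R]_n) : Prop :=
  exists (k : nat) (c : 'I_k -> R) (F : 'I_k -> 'M[R]_n),
    (forall i, M (F i)) /\ A = \sum_(i < k) c i *: F i.

Definition non_dissipative (R : realType) (n : nat) (M : 'M[R]_n -> Prop) : Prop :=
  forall A, in_span M A -> psd_mx A -> A = 0.

(* Main.v *)
Require Import Defs.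
From HB Require Import structures.
From mathcomp Require Import all_boot all_order all_algebra.
From mathcomp Require Import reals.
From mathcomp Require Import complex spectral sesquilinear.
From mathcomp Require Import classical_sets boolp topology normedtype derive.
From mathcomp Require Import ring lra.
Set Implicit Arguments. Unset Strict Implicit. Unset Printing Implicit Defensive.
Import Order.TTheory GRing.Theory Num.Theory.
Import numFieldTopology.Exports numFieldNormedType.Exports.
Local Open Scope classical_set_scope.
Local Open Scope ring_scope.
Section A.
Variable R : realType.

Definition qf n (A : 'M[R]_n) (v : 'cV[R]_n) : R := (v^T *m A *m v) 0 0.

Lemma qfE n (A : 'M[R]_n) v : qf A v = \sum_i \sum_j v i 0 * A i j * v j 0.
Proof.
rewrite /qf mxE exchange_big; apply: eq_bigr => j _; rewrite mxE big_distrl /=.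
by apply: eq_bigr => i _; rewrite !mxE.
Qed.

Lemma trace_qf n m (A : 'M[R]_n) (T : 'M[R]_(n, m)) :
  \tr (T^T *m A *m T) = \sum_j qf A (col j T).
Proof.
rewrite /mxtrace; apply: eq_bigr => j _.
rewrite /qf !mxE; apply: eq_bigr => k _; rewrite !mxE; congr (_ * _).
by apply: eq_bigr => l _; rewrite !mxE.
Qed.

Lemma sumsqE n (v : 'cV[R]_n) : (v^T *m v) 0 0 = \sum_i v i 0 ^+ 2.
Proof. by rewrite mxE; apply: eq_bigr => i _; rewrite !mxE expr2. Qed.

Lemma sumsq_ge0 n (v : 'cV[R]_n) : 0 <= (v^T *m v) 0 0.
Proof. by rewrite sumsqE sumr_ge0 // => i _; rewrite sqr_ge0. Qed.

Lemma sumsq_eq0 n (v : 'cV[R]_n) : (v^T *m v) 0 0 = 0 -> v = 0.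
Proof.
rewrite sumsqE => H; apply/matrixP => i j; rewrite ord1 mxE.
have := psumr_eq0P (fun i _ => sqr_ge0 (v i 0)) H (i:=i) isT.
by move/eqP; rewrite sqrf_eq0 => /eqP.
Qed.

Lemma qf_lin n (A : 'M[R]_n) v w (t : R) : A^T = A ->
  qf A (v + t *: w) = qf A v + 2 * t * (w^T *m A *m v) 0 0 + t ^+ 2 * qf A w.
Proof.
move=> sA.
have h : (v^T *m A *m w) 0 0 = (w^T *m A *m v) 0 0.
  have -> : (v^T *m A *m w) 0 0 = (v^T *m A *m w)^T 0 0 by rewrite [RHS]mxE.
  by rewrite !trmx_mul trmxK sA mulmxA.
rewrite /qf [(v + _)^T]linearD /= [(t *: w)^T]linearZ /= !mulmxDl !mulmxDr.
rewrite -!scalemxAl -!scalemxAr.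
move: h; set a := v^T *m A *m v; set b := v^T *m A *m w; set c := w^T *m A *m v; set d := w^T *m A *m w.
clearbody a b c d; move=> h; rewrite !mxE h; ring.
Qed.

Lemma psd_ker n (A : 'M[R]_n) v : psd_mx A -> qf A v = 0 -> A *m v = 0.
Proof.
move=> [sA hA] h0; apply: sumsq_eq0.
set w := A *m v.
have eb : (w^T *m A *m v) 0 0 = (w^T *m w) 0 0 by rewrite /w mulmxA.
have := sumsq_ge0 w; rewrite -eb.
set b := (w^T *m A *m v) 0 0 => b0.

set c := qf A w.
have c0 : 0 <= c by exact: hA.
set s := (c + 1)^-1.
have hs : 0 < s by rewrite invr_gt0; lra.
have hsc : s * (c + 1) = 1 by rewrite mulVf //; lra.
have := hA (v + (- b * s) *: w); rewrite -/(qf _ _) qf_lin // h0 add0r -/b -/c.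
have -> : 2 * (- b * s) * b + (- b * s) ^+ 2 * c
   = - 2 * (b * b) * s - (b * b) * (s * s) + (b * b) * s * (s * (c + 1)) by ring.
rewrite hsc => H.
have H2 : (b * b) * (s + s * s) <= 0 by lra.
have H3 : 0 < s + s * s by nra.
have : b * b <= 0 by nra.
nra.
Qed.

End A.
Section A2.
Variable R : realType.

Lemma col_mulmx m n p (A : 'M[R]_(m, n)) (T : 'M[R]_(n, p)) j :
  col j (A *m T) = A *m col j T.
Proof. by rewrite !colE mulmxA. Qed.

Lemma pd_unit n (Q : 'M[R]_n) : pd_mx Q -> Q \in unitmx.
Proof.
move=> [sQ hQ]; rewrite unitmxE unitfE; apply/negP => /det0P [v v0 vQ].
have : v^T != 0 by apply: contra v0 => /eqP h; rewrite -[v]trmxK h linear0.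
move=> /hQ; rewrite -mulmxA.
have -> : Q *m v^T = 0 by rewrite -sQ -trmx_mul vQ linear0.
by rewrite mulmx0 mxE ltxx.
Qed.



Lemma mulmx_col0 n p (A : 'M[R]_n) (T : 'M[R]_(n, p)) :
  (forall j, A *m col j T = 0) -> A *m T = 0.
Proof.
move=> h; apply/matrixP => i j.
have := congr1 (fun X : 'cV[R]_n => X i 0) (h j); rewrite -col_mulmx !mxE => ->.
by [].
Qed.

Lemma psd_trace0 n (A T : 'M[R]_n) : psd_mx A -> T \in unitmx ->
  \tr (T^T *m A *m T) = 0 -> A = 0.
Proof.
move=> hA hT; rewrite trace_qf => h.
have h' j : qf A (col j T) = 0.
  by apply: (psumr_eq0P _ h) => // i _; exact: hA.2.
have : A *m T = 0 by apply: mulmx_col0 => j; apply: psd_ker.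
by move=> AT; rewrite -[A](mulmxK hT) AT mul0mx.
Qed.

Lemma iii_nd n (M : 'M[R]_n -> Prop) (T : 'M[R]_n) : T \in unitmx ->
  (forall F, M F -> \tr (T^T *m F *m T) = 0) -> non_dissipative M.
Proof.
move=> hT h A [k [c [F [hF ->]]]] hpsd; apply: psd_trace0 hpsd hT _.
rewrite mulmx_sumr mulmx_suml linear_sum big1 // => i _.
by rewrite -scalemxAr -scalemxAl linearZ /= h // mulr0.
Qed.

End A2.
Section A3.
Variable R : realType.

Lemma qf0 n (Q : 'M[R]_n) : qf Q 0 = 0.
Proof. by rewrite /qf mulmx0 mxE. Qed.

Lemma pd_qf_ge0 n (Q : 'M[R]_n) v : pd_mx Q -> 0 <= qf Q v.
Proof.
move=> [_ h]; have [->|v0] := eqVneq v 0; first by rewrite qf0.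
exact/ltW/h.
Qed.

Lemma pd_qf0 n (Q : 'M[R]_n) v : pd_mx Q -> qf Q v = 0 -> v = 0.
Proof.
move=> [_ h] e; apply/eqP; apply: contraT => /h; rewrite -/(qf _ _) e ltxx.
by [].
Qed.

Lemma sylv0 n (Q S : 'M[R]_n) : pd_mx Q -> Q *m S + S *m Q = 0 -> S = 0.
Proof.
move=> hQ E.
have h : \tr (S^T *m Q *m S) + \tr (S^T^T *m Q *m S^T) = 0.
  rewrite trmxK.
  have -> : \tr (S *m Q *m S^T) = \tr (S^T *m (S *m Q)) by rewrite mxtrace_mulC.
  by rewrite -mulmxA -linearD /= -mulmxDr E mulmx0 linear0.
rewrite !trace_qf in h.
have g1 : 0 <= \sum_j qf Q (col j S) by apply: sumr_ge0 => j _; exact: pd_qf_ge0.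
have g2 : 0 <= \sum_j qf Q (col j S^T) by apply: sumr_ge0 => j _; exact: pd_qf_ge0.
have h0 : \sum_j qf Q (col j S) = 0 by lra.
apply/matrixP => i j; rewrite mxE.
have := pd_qf0 hQ (psumr_eq0P (fun j _ => pd_qf_ge0 (col j S) hQ) h0 (i:=j) isT).
by move/(congr1 (fun X : 'cV[R]_n => X i 0)); rewrite !mxE.
Qed.

End A3.
Section Cx.
Variable R : realType.
Local Notation Re := (@complex.Re R).
Local Notation Im := (@complex.Im R).
Local Notation C := (R[i]).
Local Notation toC := (real_complex R).
Local Notation conjC := (@Num.Def.conjC C).

Lemma complex_ext (z w : C) : Re z = Re w -> Im z = Im w -> z = w.
Proof. by case: z w => a b [c d] /= -> ->. Qed.

Lemma ReD (z w : C) : Re (z + w) = Re z + Re w. Proof. by case: z w => a b [c d]. Qed.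
Lemma ImD (z w : C) : Im (z + w) = Im z + Im w. Proof. by case: z w => a b [c d]. Qed.
Lemma ReM (z w : C) : Re (z * w) = Re z * Re w - Im z * Im w.
Proof. by case: z w => a b [c d]. Qed.
Lemma ImM (z w : C) : Im (z * w) = Re z * Im w + Im z * Re w.
Proof. by case: z w => a b [c d]. Qed.
Lemma Re_toC (x : R) : Re (toC x) = x. Proof. by []. Qed.
Lemma Im_toC (x : R) : Im (toC x) = 0. Proof. by []. Qed.
Lemma conj_toC (x : R) : conjC (toC x) = toC x.
Proof. by rewrite /conjC /=; apply: complex_ext => //=; rewrite oppr0. Qed.
Lemma ReJ (z : C) : Re (conjC z) = Re z. Proof. by case: z. Qed.
Lemma ImJ (z : C) : Im (conjC z) = - Im z. Proof. by case: z. Qed.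

Lemma ReSum (I : Type) (r : seq I) (P : pred I) (F : I -> C) :
  Re (\sum_(i <- r | P i) F i) = \sum_(i <- r | P i) Re (F i).
Proof. by elim/big_rec2: _ => // i x y _ <-; rewrite ReD. Qed.
Lemma ImSum (I : Type) (r : seq I) (P : pred I) (F : I -> C) :
  Im (\sum_(i <- r | P i) F i) = \sum_(i <- r | P i) Im (F i).
Proof. by elim/big_rec2: _ => // i x y _ <-; rewrite ImD. Qed.

End Cx.
Section Cx2.
Variable R : realType.
Local Notation Re := (@complex.Re R).
Local Notation Im := (@complex.Im R).
Local Notation C := (R[i]).
Local Notation toC := (real_complex R).
Local Notation conjC := (@Num.Def.conjC C).

Lemma cform_sum n (A : 'M[C]_n) (y : 'rV[C]_n) :
  (y *m A *m map_mx conjC y^T) 0 0 = \sum_k \sum_l y 0 k * A k l * conjC (y 0 l).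
Proof.
rewrite mxE exchange_big; apply: eq_bigr => l _; rewrite mxE big_distrl /=.
by apply: eq_bigr => k _; rewrite !mxE.
Qed.

Lemma cqf_real n (P : 'M[R]_n) (y : 'rV[C]_n) : P^T = P ->
  (y *m map_mx toC P *m map_mx conjC y^T) 0 0
  = toC (qf P (\col_k Re (y 0 k)) + qf P (\col_k Im (y 0 k))).
Proof.
move=> sP; rewrite cform_sum; apply: complex_ext.
- rewrite ReSum Re_toC !qfE -big_split /=; apply: eq_bigr => k _.
  rewrite ReSum -big_split /=; apply: eq_bigr => l _.
  rewrite !mxE !(ReM, ImM) Re_toC Im_toC ReJ ImJ; ring.
- rewrite ImSum Im_toC.
  set t := fun k l => P k l * (Im (y 0 k) * Re (y 0 l) - Re (y 0 k) * Im (y 0 l)).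
  have -> : \sum_k Im (\sum_l y 0 k * (map_mx toC P) k l * conjC (y 0 l))
          = \sum_k \sum_l t k l.
    apply: eq_bigr => k _; rewrite ImSum; apply: eq_bigr => l _.
    rewrite !mxE !(ReM, ImM) Re_toC Im_toC ReJ ImJ /t; ring.
  have h1 : \sum_k \sum_l t k l = \sum_k \sum_l t l k by rewrite exchange_big.
  have h2 : \sum_k \sum_l t l k = - \sum_k \sum_l t k l.
    rewrite -sumrN; apply: eq_bigr => k _; rewrite -sumrN.
    apply: eq_bigr => l _; rewrite /t.
    have -> : P l k = P k l by rewrite -[in LHS]sP mxE.
    ring.
  lra.
Qed.

End Cx2.
Section Cx3.
Variable R : realType.
Local Notation Re := (@complex.Re R).
Local Notation Im := (@complex.Im R).
Local Notation C := (R[i]).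
Local Notation toC := (real_complex R).
Local Notation conjC := (@Num.Def.conjC C).
Local Notation ct A := (map_mx conjC (A^T)).

Lemma ct_mul m n p (A : 'M[C]_(m, n)) (B : 'M[C]_(n, p)) : ct (A *m B) = ct B *m ct A.
Proof. by rewrite trmx_mul map_mxM. Qed.

Lemma cpd n (P : 'M[R]_n) (y : 'rV[C]_n) : pd_mx P -> y != 0 ->
  0 < (y *m map_mx toC P *m ct y) 0 0.
Proof.
move=> hP y0; rewrite cqf_real; last exact: hP.1.
rewrite -[0]/(toC 0) ltcR.
set a := \col_k Re (y 0 k); set b := \col_k Im (y 0 k).
have [a0|a0] := eqVneq a 0.
  have [b0|b0] := eqVneq b 0.
    case/eqP: y0; apply/matrixP => i k; rewrite ord1 mxE.
    apply: complex_ext => /=.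
      by have := congr1 (fun X : 'cV[R]_n => X k 0) a0; rewrite !mxE.
    by have := congr1 (fun X : 'cV[R]_n => X k 0) b0; rewrite !mxE.
  by rewrite a0 qf0 add0r; apply: hP.2.
have := hP.2 a a0; rewrite -/(qf _ _) => ha.
have := pd_qf_ge0 b hP; lra.
Qed.

Lemma pd_sqrt n (P : 'M[R]_n) : pd_mx P -> exists Q, pd_mx Q /\ Q *m Q = P.
Proof.
move=> hP; have sP := hP.1.
set Pc := map_mx toC P.
have herm : Pc \is hermsymmx.
  apply/is_hermitianmxP; rewrite expr0 scale1r; apply/matrixP => i j.
  by rewrite !mxE conj_toC -[in LHS]sP mxE.
set U := spectralmx Pc; set d := spectral_diag Pc.
have Uu : U \is unitarymx := spectral_unitarymx Pc.
have Uunit : U \in unitmx := spectral_unit Pc.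
have /orthomx_spectralP dec := hermitian_normalmx herm.
have iU : invmx U = ct U := invmx_unitary Uu.
have UUt : U *m ct U = 1%:M by apply/unitarymxP.
have UtU : ct U *m U = 1%:M by rewrite -iU mulVmx.
have Dd : diag_mx d = U *m Pc *m ct U.
  by rewrite [in RHS]dec -/U -/d iU !mulmxA UUt mul1mx -mulmxA UUt mulmx1.
have dpos i : 0 < d 0 i.
  have -> : d 0 i = (diag_mx d) i i by rewrite mxE eqxx mulr1n.
  rewrite Dd.
  have -> : (U *m Pc *m ct U) i i = (row i U *m Pc *m ct (row i U)) 0 0.
    rewrite !mxE; apply: eq_bigr => k _; rewrite !mxE; congr (_ * _).
    by apply: eq_bigr => l _; rewrite !mxE.
  apply: cpd => //.
  apply/eqP => h0; have := congr1 (row i) UUt; rewrite row_mul h0 mul0mx.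
  move/(congr1 (fun X : 'rV[C]_n => X 0 i)); rewrite !mxE eqxx /=.
  by move/eqP; rewrite eq_sym oner_eq0.
set r := \row_i toC (Num.sqrt (Re (d 0 i))).
have Red i : 0 < Re (d 0 i) by have := dpos i; rewrite ltcE => /andP [].
have dr i : d 0 i = r 0 i * r 0 i.
  have := dpos i; rewrite ltcE => /andP [/eqP him hre].
  rewrite mxE -rmorphM /= -expr2 sqr_sqrtr ?ltW //.
  by apply: complex_ext => //=; rewrite him.
have rpos i : 0 < r 0 i by rewrite mxE -[0]/(toC 0) ltcR sqrtr_gt0.
set Qc := ct U *m diag_mx r *m U.
have QQ : Qc *m Qc = Pc.
  have -> : Qc *m Qc = ct U *m (diag_mx r *m (U *m ct U) *m diag_mx r) *m U.
    by rewrite /Qc !mulmxA.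
  rewrite UUt mulmx1 mulmx_diag.
  have -> : \row_j (r 0 j * r 0 j) = d by apply/rowP => j; rewrite mxE dr.
  by rewrite [in RHS]dec -/U -/d iU.
have ctdiag : ct (diag_mx r) = diag_mx r.
  apply/matrixP => i j; rewrite !mxE eq_sym.
  case: eqP => [->|_]; rewrite ?mulr1n ?mulr0n ?rmorph0 //.
  exact: conj_toC.
have ctQ : ct Qc = Qc.
  by rewrite /Qc !ct_mul ctdiag /= trmxCK mulmxA.
have Qherm i j : Qc i j = conjC (Qc j i).
  by rewrite -[in LHS]ctQ !mxE.
have Qcpd (x : 'rV[C]_n) : x != 0 -> 0 < (x *m Qc *m ct x) 0 0.
  move=> x0.
  set w := x *m ct U.
  have -> : x *m Qc *m ct x = w *m diag_mx r *m ct w.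
    by rewrite /w ct_mul trmxCK /Qc !mulmxA.
  have w0 : w != 0.
    apply: contra x0 => /eqP w0; apply/eqP.
    by rewrite -[x]mulmx1 -UtU mulmxA -/w w0 mul0mx.
  clearbody w.
  have [i0 wi0] : exists i0, w 0 i0 != 0.
    apply/existsP; apply: contraT; rewrite negb_exists => /forallP h.
    case/eqP: w0; apply/matrixP => i j; rewrite (ord1 i) [RHS]mxE.
    by have := h j; rewrite negbK => /eqP.
  rewrite mxE (bigD1 i0) //=.
  have t0 : 0 < (w *m diag_mx r) 0 i0 * (ct w) i0 0.
    rewrite mul_mx_diag !mxE mulrAC mulr_gt0 ?mul_conjC_gt0 //.
    by have := rpos i0; rewrite mxE.
  have := ltr_pwDl t0.
  move=> HH. apply: HH.
  apply: sumr_ge0 => i _.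
  rewrite mul_mx_diag !mxE mulrAC mulr_ge0 ?mul_conjC_ge0 //.
  by have := rpos i; rewrite mxE => /ltW.
clearbody Qc.
set Q := map_mx Re Qc; set S := map_mx Im Qc.
have hQ : pd_mx Q.
  split.
    apply/matrixP => i j; rewrite !mxE Qherm.
    exact: ReJ.
  move=> v v0.
  set x := (map_mx toC v)^T.
  have x0 : x != 0.
    apply: contra v0 => /eqP h; apply/eqP/matrixP => i j.
    rewrite ord1 mxE.
    have := congr1 (fun X : 'rV[C]_n => X 0 i) h; rewrite !mxE.
    by case.
  have E : Re ((x *m Qc *m ct x) 0 0) = qf Q v.
    rewrite cform_sum ReSum qfE; apply: eq_bigr => k _; rewrite ReSum; apply: eq_bigr => l _.
    by rewrite !mxE conj_toC !(ReM, ImM) !Re_toC !Im_toC; ring.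
  by have := Qcpd x x0; rewrite ltcE => /andP [_]; rewrite E.
have E1 : Q *m Q - S *m S = P.
  apply/matrixP => i j; rewrite !mxE -sumrB.
  have := congr1 (fun X : 'M[C]_n => Re (X i j)) QQ; rewrite /= !mxE ReSum Re_toC => <-.
  by apply: eq_bigr => k _; rewrite ReM !mxE.
have E2 : Q *m S + S *m Q = 0.
  apply/matrixP => i j; rewrite !mxE -big_split /=.
  have := congr1 (fun X : 'M[C]_n => Im (X i j)) QQ; rewrite /= !mxE ImSum Im_toC => H.
  by rewrite -[RHS]H; apply: eq_bigr => k _; rewrite ImM !mxE.
have S0 := sylv0 hQ E2.
exists Q; split => //.
by rewrite -E1 S0 mulmx0 subr0.
Qed.

End Cx3.
Section B1.
Variable R : realType.

Lemma span_basis n (M : 'M[R]_n -> Prop) : exists k (Vb : 'M[R]_(k, n * n)),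
  (forall F, M F -> (mxvec F <= Vb)%MS) /\
  (forall u, (u <= Vb)%MS -> in_span M (vec_mx u)).
Proof.
pose P r := exists k (Vb : 'M[R]_(k, n * n)),
  (forall i, M (vec_mx (row i Vb))) /\ \rank Vb = r.
have exP : exists r, `[< P r >].
  exists 0%N; apply/asboolP; exists 0%N, 0; split; first by case.
  by rewrite mxrank0.
have ubP : forall r, `[< P r >] -> (r <= n * n)%N.
  by move=> r /asboolP [k [Vb [_ <-]]]; exact: rank_leq_col.
case: (ex_maxnP exP ubP) => r /asboolP [k [Vb [hrow hr]]] hmax.
exists k, Vb; split.
  move=> F MF; apply: contraT => hF.
  set B := col_mx Vb (mxvec F).
  have sVB : (Vb <= B)%MS by rewrite -addsmxE addsmxSl.
  have : (\rank Vb < \rank B)%N.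
    rewrite (ltn_leqif (mxrank_leqif_sup sVB)); apply: contra hF => hBV.
    by apply: submx_trans hBV; rewrite -addsmxE addsmxSr.
  rewrite hr => hlt.
  have : (\rank B <= r)%N.
    apply: hmax; apply/asboolP; exists (k + 1)%N, B; split => // i.
    rewrite /B; case: (split_ordP i) => j ->.
      by rewrite rowKu.
    rewrite rowKd (ord1 j).
    have -> : row 0 (mxvec F) = mxvec F by apply/rowP => l; rewrite mxE.
    by rewrite mxvecK.
  by rewrite leqNgt hlt.
move=> u /submxP [D ->].
exists k, (fun i => D 0 i), (fun i => vec_mx (row i Vb)); split => //.
by rewrite mulmx_sum_row linear_sum; apply: eq_bigr => i _; rewrite linearZ.
Qed.

End B1.
Section B2.
Variable R : realType.

Lemma lin_sum (V : lmodType R) (g : V -> R)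
    (hg : forall a x y, g (a *: x + y) = a * g x + g y) (I : Type) (r : seq I)
    (c : I -> R) (F : I -> V) :
  g (\sum_(i <- r) c i *: F i) = \sum_(i <- r) c i * g (F i).
Proof.
have g0 : g 0 = 0.
  have := hg 1 0 0; rewrite scale1r addr0 mul1r => h.
  by have := congr1 (fun x => x - g 0) h; rewrite subrr addrK.
elim/big_rec2: _ => // i x y _ <-.
by rewrite hg.
Qed.

Lemma lin_cont N (g : 'rV[R]_N -> R)
    (hg : forall a x y, g (a *: x + y) = a * g x + g y) : continuous g.
Proof.
have e : g = fun u => \sum_(i < N) g (delta_mx 0 i) * u 0 i.
  apply: funext => u.
  have {1}-> : u = \sum_(i < N) u 0 i *: delta_mx 0 i.
    rewrite {1}[u]matrix_sum_delta big_ord1.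
    by apply: eq_bigr => i _.
  rewrite lin_sum //; apply: eq_bigr => i _; exact: mulrC.
rewrite e; apply: continuous_big => //; first exact: add_continuous.
move=> i _ u.
have h1 : {for u, continuous (fun=> g (delta_mx 0 i) : R)} by exact: cst_continuous.
have h2 : {for u, continuous (fun v : 'rV[R]_N => v 0 i)} by exact: coord_continuous.
exact: (continuousM h1 h2).
Qed.

Lemma sumsq_cont N m (g : 'I_m -> 'rV[R]_N -> R) :
  (forall j, continuous (g j)) -> continuous (fun u => \sum_j (g j u) ^+ 2).
Proof.
move=> hg; apply: continuous_big => //; first exact: add_continuous.
move=> j _ u.
have -> : (fun x => g j x ^+ 2) = (g j \* g j) by apply: funext => x; rewrite /= expr2.
exact: (continuousM (hg j u) (hg j u)).
Qed.

End B2.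

Lemma lin_sum1 (R : realType) (V : lmodType R) (g : V -> R)
    (hg : forall a x y, g (a *: x + y) = a * g x + g y) (I : Type) (r : seq I)
    (F : I -> V) :
  g (\sum_(i <- r) F i) = \sum_(i <- r) g (F i).
Proof.
have -> : \sum_(i <- r) F i = \sum_(i <- r) (1 : R) *: F i.
  by apply: eq_bigr => i _; rewrite scale1r.
by rewrite lin_sum //; apply: eq_bigr => i _; rewrite mul1r.
Qed.
Section B3.
Variable R : realType.

Definition Kset n : set 'rV[R]_(n * n) :=
  [set u | psd_mx (vec_mx u) /\ \tr (vec_mx u) = 1].

Lemma rank1_qf n (x v : 'cV[R]_n) : qf (x *m x^T) v = ((x^T *m v) 0 0) ^+ 2.
Proof.
rewrite /qf mulmxA -(mulmxA (v^T *m x)) mxE big_ord1 expr2; congr (_ * _).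
have -> : (v^T *m x) 0 0 = (v^T *m x)^T 0 0 by rewrite [RHS]mxE.
by rewrite trmx_mul trmxK.
Qed.

Lemma rank1_tr n (x : 'cV[R]_n) : \tr (x *m x^T) = (x^T *m x) 0 0.
Proof. by rewrite mxtrace_mulC trace_mx11. Qed.

Lemma rank1_K n (x : 'cV[R]_n) : x != 0 ->
  @Kset n (mxvec (((x^T *m x) 0 0)^-1 *: (x *m x^T))).
Proof.
move=> x0; set s := (x^T *m x) 0 0.
have s0 : 0 < s.
  rewrite lt_def sumsq_ge0 andbT; apply: contra x0 => /eqP h; apply/eqP.
  exact: sumsq_eq0.
rewrite /Kset /= mxvecK; split; first split.
- by rewrite /symmetric_mx linearZ /= trmx_mul trmxK.
- move=> v; rewrite -scalemxAr -scalemxAl mxE.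
  rewrite -/(qf _ _) rank1_qf mulr_ge0 ?sqr_ge0 //.
  by rewrite invr_ge0 ltW.
- by rewrite linearZ /= rank1_tr -/s mulVf // gt_eqF.
Qed.

Lemma qf_delta n (A : 'M[R]_n) i j :
  ((delta_mx j 0 : 'cV[R]_n)^T *m A *m (delta_mx i 0 : 'cV[R]_n)) 0 0 = A j i.
Proof.
by rewrite trmx_delta -colE -rowE !mxE.
Qed.

Lemma Kset_entry n (u : 'rV[R]_(n * n)) i j : @Kset n u -> `|vec_mx u i j| <= 1.
Proof.
move=> [[sA hA] htr]; set A := vec_mx u in sA hA htr *.
have dA k : 0 <= A k k by have := hA (delta_mx k 0); rewrite qf_delta.
have d1 k : A k k <= 1.
  rewrite -htr /mxtrace (bigD1 k) //= lerDl; apply: sumr_ge0 => l _; exact: dA.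
have hp (t : R) : 0 <= A j j + 2 * t * A i j + t ^+ 2 * A i i.
  have := hA (delta_mx j 0 + t *: delta_mx i 0).
  by rewrite -/(qf _ _) qf_lin // /qf !qf_delta.
have := hp 1; have := hp (-1); have := d1 i; have := d1 j.
have := dA i; have := dA j.
rewrite ler_norml; move=> *; apply/andP; split; nra.
Qed.

End B3.
Arguments Kset : clear implicits.
Section B4.
Variable R : realType.

Lemma closed_lin_eq N (g : 'rV[R]_N -> R)
    (hg : forall a x y, g (a *: x + y) = a * g x + g y) (c : R) :
  closed [set u | g u = c].
Proof.
have := @preimage_closed _ _ g [set x | x = c] _ (@closed_eq _ c); apply.
by move=> x _; exact: lin_cont.
Qed.

Lemma closed_lin_ge N (g : 'rV[R]_N -> R)
    (hg : forall a x y, g (a *: x + y) = a * g x + g y) :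
  closed [set u | 0 <= g u].
Proof.
have := @preimage_closed _ _ g [set x | 0 <= x] _ (@closed_ge _ 0); apply.
by move=> x _; exact: lin_cont.
Qed.

Lemma Kset_closed n : closed (Kset R n).
Proof.
have -> : Kset R n =
  (\bigcap_(p in [set: 'I_n * 'I_n]) [set u | vec_mx u p.1 p.2 - vec_mx u p.2 p.1 = 0])
  `&` (\bigcap_(v in [set: 'cV[R]_n]) [set u | 0 <= qf (vec_mx u) v])
  `&` [set u | \tr (vec_mx u) = 1].
  apply: funext => u; apply: propext; split.
    move=> [[sA hA] htr]; split => //; split.
      by move=> [i j] _ /=; rewrite -[in X in X - _]sA mxE subrr.
    by move=> v _; exact: hA.
  move=> [[h1 h2] h3]; split => //; split; last by move=> v; exact: h2.
  apply/matrixP => i j; rewrite mxE; apply/eqP; rewrite -subr_eq0; apply/eqP.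
  exact: (h1 (j, i)).
apply: closedI; first apply: closedI.
- apply: closed_bigI => p _; apply: closed_lin_eq => a x y.
  by rewrite !mxE; ring.
- apply: closed_bigI => v _; apply: closed_lin_ge => a x y.
  rewrite !qfE mulr_sumr -big_split /=; apply: eq_bigr => k _.
  rewrite mulr_sumr -big_split /=; apply: eq_bigr => l _; rewrite !mxE. ring.
- apply: closed_lin_eq => a x y; by rewrite !linearP.
Qed.

Lemma Kset_bounded n : bounded_set (Kset R n).
Proof.
exists 1; split; first exact: num_real.
move=> M M1 u Ku; apply: le_trans (ltW M1).
rewrite /Num.norm /= mx_normrE; apply: bigmax_le => //= [[i k]] _.
rewrite (ord1 i); case: (mxvec_indexP k) => j l.
by rewrite -[u]vec_mxK mxvecE; exact: Kset_entry.
Qed.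

Lemma Kset_compact n : compact (Kset R n).
Proof. apply: bounded_closed_compact; [exact: Kset_bounded|exact: Kset_closed]. Qed.

End B4.
Section B5.
Variable R : realType.

Lemma Kset_conv n (u w : 'rV[R]_(n * n)) t : 0 <= t <= 1 ->
  Kset R n u -> Kset R n w -> Kset R n ((1 - t) *: u + t *: w).
Proof.
move=> /andP [t0 t1] [[su hu] tu] [[sw hw] tw].
rewrite /Kset /= linearD !linearZ /=; split; first split.
- by rewrite /symmetric_mx linearD !linearZ /= su sw.
- move=> v; have := hu v; have := hw v.
  rewrite mulmxDr mulmxDl -!scalemxAr -!scalemxAl !mxE => hw' hu'.
  apply: addr_ge0; apply: mulr_ge0 => //; lra.
- by rewrite linearD !linearZ /= tu tw; ring.
Qed.

Definition dot m (a b : 'rV[R]_m) := \sum_j a 0 j * b 0 j.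

Lemma dot_pos m (z : 'rV[R]_m) : z != 0 -> 0 < dot z z.
Proof.
move=> z0.
have e : dot z z = ((z^T)^T *m z^T) 0 0.
  by rewrite trmxK mxE; apply: eq_bigr => j _; rewrite mxE.
rewrite e lt_def sumsq_ge0 andbT; apply: contra z0 => /eqP h; apply/eqP.
by have := sumsq_eq0 h; move/(congr1 trmx); rewrite trmxK linear0.
Qed.

Lemma variational (a c : R) : 0 <= c ->
  (forall t, 0 <= t <= 1 -> 0 <= 2 * t * a + t ^+ 2 * c) -> 0 <= a.
Proof.
move=> c0 h; rewrite leNgt; apply/negP => a0.
set s := (c - a)^-1.
have hs : 0 < s by rewrite invr_gt0; lra.
have hsc : s * (c - a) = 1 by rewrite mulVf //; lra.
have := h (- a * s).
have t1 : - a * s <= 1.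
  by rewrite -hsc mulrC ler_pM2l //; lra.
have t0 : 0 <= - a * s by nra.
rewrite t0 t1 /= => /(_ isT).
have -> : 2 * (- a * s) * a + (- a * s) ^+ 2 * c
   = - 2 * (a * a) * s + (a * a) * s * (s * (c - a)) + (a * a) * s * (s * a) by ring.
rewrite hsc => H.
have : (a * a) * s * (s * a) < 0.
  have : 0 < a * a by nra.
  nra.
nra.
Qed.

End B5.
Section B6.
Variable R : realType.

Lemma sep n (M : 'M[R]_n -> Prop) : (forall F, M F -> symmetric_mx F) ->
  non_dissipative M -> exists P, pd_mx P /\ forall F, M F -> \tr (F *m P) = 0.
Proof.
case: n M => [|n] M hsym hnd.
  exists 0; split; first split.
  - by rewrite /symmetric_mx linear0.
  - by move=> v; rewrite flatmx0 eqxx.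
  by move=> F _; rewrite mulmx0 linear0.
have [k [Vb [hVb1 hVb2]]] := span_basis M.
set C := cokermx Vb.
have qM F : M F -> mxvec F *m C = 0 by move/hVb1; rewrite submxE => /eqP.
have qsp X : mxvec X *m C = 0 -> in_span M X.
  by move=> h; rewrite -[X]mxvecK; apply: hVb2; rewrite submxE h.
pose f := fun u : 'rV[R]_(n.+1 * n.+1) => \sum_j ((u *m C) 0 j) ^+ 2.
have fc : continuous f.
  apply: sumsq_cont => j; apply: lin_cont => a x y.
  by rewrite mulmxDl -scalemxAl !mxE.
have K0 : Kset R n.+1 !=set0.
  have d0 : (delta_mx 0 0 : 'cV[R]_n.+1) != 0.
    apply/negP => /eqP/matrixP/(_ 0 0); rewrite !mxE eqxx /=.
    by move/eqP; rewrite oner_eq0.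
  by eexists; apply: rank1_K d0.
have [us usK usmin] := compact_EVT_min K0 (@Kset_compact R n.+1) (continuous_subspaceT fc).
rewrite in_setE in usK.
set z := us *m C.
have z0 : z != 0.
  apply/negP => /eqP hz.
  have h1 : vec_mx us = 0.
    apply: hnd; last exact: usK.1.
    by apply: qsp; rewrite vec_mxK.
  by have := usK.2; rewrite h1 linear0 => /eqP; rewrite eq_sym oner_eq0.
have var u : Kset R n.+1 u -> dot z z <= dot (u *m C) z.
  move=> Ku; set y := u *m C.
  have H t : 0 <= t <= 1 ->
      0 <= 2 * t * (dot z y - dot z z) + t ^+ 2 * \sum_j (y 0 j - z 0 j) ^+ 2.
    move=> ht; have := usmin _ (mem_set (Kset_conv ht usK Ku)).
    rewrite /f mulmxDl -!scalemxAl -/z -/y.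
    have -> : \sum_j (((1 - t) *: z + t *: y) 0 j) ^+ 2 =
       \sum_j (z 0 j) ^+ 2 + (2 * t * (dot z y - dot z z)
          + t ^+ 2 * \sum_j (y 0 j - z 0 j) ^+ 2).
      rewrite /dot mulr_sumr -sumrB mulr_sumr -!big_split /=.
      apply: eq_bigr => j _; rewrite !mxE; ring.
    by rewrite lerDl.
  have := variational (sumr_ge0 _ (fun j _ => sqr_ge0 (y 0 j - z 0 j))) H.
  rewrite subr_ge0 /dot => h; apply: (le_trans h).
  by rewrite le_eqVlt; apply/orP; left; apply/eqP; apply: eq_bigr => j _; rewrite mulrC.
pose phi X := dot (mxvec X *m C) z.
have hphi a X Y : phi (a *: X + Y) = a * phi X + phi Y.
  rewrite /phi /dot linearP /= mulmxDl -scalemxAl mulr_sumr -big_split /=.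
  by apply: eq_bigr => j _; rewrite !mxE; ring.
have phiM F : M F -> phi F = 0.
  by move=> MF; rewrite /phi qM // /dot big1 // => j _; rewrite mxE mul0r.
have phiK u : Kset R n.+1 u -> 0 < phi (vec_mx u).
  move=> Ku; rewrite /phi vec_mxK; exact: (lt_le_trans (dot_pos z0) (var u Ku)).
pose P0 := \matrix_(i, j) phi (delta_mx i j).
have phiE X : phi X = \sum_i \sum_j X i j * P0 i j.
  rewrite {1}[X]matrix_sum_delta lin_sum1 //; apply: eq_bigr => i _.
  rewrite lin_sum //; apply: eq_bigr => j _; by rewrite mxE.
exists (P0 + P0^T); split; first split.
- by rewrite /symmetric_mx linearD /= trmxK addrC.
- move=> v v0.
  have := phiK _ (rank1_K v0); rewrite mxvecK.
  set s := (v^T *m v) 0 0.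
  have s0 : 0 < s.
    rewrite lt_def sumsq_ge0 andbT; apply: contra v0 => /eqP h; apply/eqP.
    exact: sumsq_eq0.
  have phi0 : phi 0 = 0 by rewrite /phi linear0 mul0mx /dot big1 // => j _; rewrite mxE mul0r.
  have := hphi s^-1 (v *m v^T) 0; rewrite !addr0 phi0 addr0 => -> hp.
  have hp' : 0 < phi (v *m v^T).
    by move: hp; rewrite pmulr_rgt0 // invr_gt0.
  have -> : (v^T *m (P0 + P0^T) *m v) 0 0 = 2 * phi (v *m v^T).
    pose a i j := v i 0 * P0 i j * v j 0.
    rewrite -/(qf _ _) qfE phiE.
    have -> : \sum_i \sum_j v i 0 * (P0 + P0^T) i j * v j 0
        = \sum_i \sum_j a i j + \sum_i \sum_j a j i.
      rewrite -big_split /=; apply: eq_bigr => i _; rewrite -big_split /=.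
      by apply: eq_bigr => j _; rewrite /a !mxE; ring.
    have -> : \sum_i \sum_j (v *m v^T) i j * P0 i j = \sum_i \sum_j a i j.
      apply: eq_bigr => i _; apply: eq_bigr => j _.
      by rewrite /a !mxE big_ord1 !mxE; ring.
    rewrite [X in _ + X]exchange_big /=.
    set S := \sum_i \sum_j a i j; lra.
  lra.
move=> F MF; have sF := hsym F MF.
have h0 := phiM F MF; rewrite phiE in h0.
rewrite /mxtrace.
have -> : \sum_i (F *m (P0 + P0^T)) i i
    = \sum_i \sum_j F i j * P0 j i + \sum_i \sum_j F i j * P0 i j.
  rewrite -big_split /=; apply: eq_bigr => i _; rewrite mxE -big_split /=.
  by apply: eq_bigr => j _; rewrite !mxE; ring.
rewrite [X in X + _]exchange_big /=.
have -> : \sum_j \sum_i F i j * P0 j i = \sum_i \sum_j F i j * P0 i j.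
  apply: eq_bigr => i _; apply: eq_bigr => j _.
  by rewrite -[in LHS]sF mxE.
by rewrite h0 addr0.
Qed.

End B6.
Section Final.

Lemma i_ii (R : realType) n (M : 'M[R]_n -> Prop) :
  (forall F, M F -> symmetric_mx F) -> non_dissipative M ->
  exists Q : 'M[R]_n, pd_mx Q /\ forall F, M F -> \tr (Q^T *m F *m Q) = 0.
Proof.
move=> hsym hnd; have [P [hP hP0]] := sep hsym hnd.
have [Q [hQ QQ]] := pd_sqrt hP.
exists Q; split => // F MF.
rewrite hQ.1 mxtrace_mulC mulmxA QQ mxtrace_mulC.
exact: hP0.
Qed.

End Final.

Local Close Scope classical_set_scope.
Local Open Scope ring_scope.
Unset Implicit Arguments.

Theorem lemma2p1 (R : realType) (n : nat) (M : 'M[R]_n -> Prop)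
    (hne : exists F, M F) (hsym : forall F, M F -> symmetric_mx F) :
  (non_dissipative M <->
     exists Q : 'M[R]_n, pd_mx Q /\ forall F, M F -> \tr (Q^T *m F *m Q) = 0)
  /\
  ((exists Q : 'M[R]_n, pd_mx Q /\ forall F, M F -> \tr (Q^T *m F *m Q) = 0) <->
     exists T : 'M[R]_n, T \in unitmx /\ forall F, M F -> \tr (T^T *m F *m T) = 0).
Proof.
have ii_iii : (exists Q : 'M[R]_n, pd_mx Q /\ forall F, M F -> \tr (Q^T *m F *m Q) = 0) ->
    exists T : 'M[R]_n, T \in unitmx /\ forall F, M F -> \tr (T^T *m F *m T) = 0.
  by case=> Q [hQ h]; exists Q; split => //; exact: pd_unit.
have iii_i : (exists T : 'M[R]_n, T \in unitmx /\ forall F, M F -> \tr (T^T *m F *m T) = 0) ->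
    non_dissipative M.
  by case=> T [hT h]; exact: iii_nd hT h.
split; split.
- exact: i_ii.
- by move=> h; apply: iii_i; apply: ii_iii.
- exact: ii_iii.
- by move=> h; apply: i_ii => //; apply: iii_i.
Qed.
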